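(* In $V_q$ set $x=e_1$, $y=e_2$, $\iota=e_{r-2}$ and $w=\epsilon_2e_{r-3}$. Then $$x^2=y-\epsilon_2=-w^2,\qquad \iota e_n=(-1)^n\epsilon_{n+1}e_{r-2-n}\ (0\le n\le r-2),\qquad \iota^2=-1.$$
   Context: Let $r\ge 5$ and $s$ be coprime odd integers with $0<s<r$, $q=\exp(i\pi s/r)$. For an integer $n$ put $[n]=\frac{q^n-q^{-n}}{q-q^{-1}}$, $[n]!=[n][n-1]\cdots[1]$, and for $1\le n\le r-1$ let $\epsilon_n=\operatorname{sign}[n]=(-1)^{\lfloor ns/r\rfloor}$ (so $\epsilon_1=1$ and $\epsilon_n=\epsilon_{r-n}$). A triple $(i,j,k)\in\{0,\dots,r-2\}^3$ is $r$-admissible if $i\le j+k$, $j\le i+k$, $k\le i+j$, $i+j+k$ is even and $i+j+k\le 2r-4$; for such a triple write $i=b+c$, $j=a+c$, $k=a+b$ and set $\langle i,j,k\rangle=(-1)^{a+b+c}\frac{[a+b+c+1]![a]![b]![c]!}{[a+b]![a+c]![b+c]!}$. Let $V_q$ be the $\mathbb{Q}$-vector space with basis $e_0,\dots,e_{r-2}$, with the symmetric bilinear form $\eta$ for which this basis is orthogonal and $\eta(e_i,e_i)=(-1)^i\epsilon_{i+1}$, and the symmetric trilinear form $\omega$ with $\omega(e_i,e_j,e_k)=\operatorname{sign}\langle i,j,k\rangle$ if $(i,j,k)$ is $r$-admissible and $0$ otherwise. The product on $V_q$ is defined by $\eta(x\cdot y,z)=\omega(x,y,z)$, giving a commutative associative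 unital algebra with unit $e_0=1$. *)

(* Defs.v *)
From HB Require Import structures.
From mathcomp Require Import all_boot all_order all_algebra.
From mathcomp Require Import reals trigo.
From mathcomp Require Import complex.
Set Implicit Arguments. Unset Strict Implicit. Unset Printing Implicit Defensive.
Import Order.TTheory GRing.Theory Num.Theory.
Local Open Scope ring_scope.

Section Vq.
Variables (R : realType) (r s : nat).

Definition qpar : R[i] :=
  Complex (cos (pi * s%:R / r%:R)) (sin (pi * s%:R / r%:R)).

Definition qint (n : nat) : R[i] :=
  (qpar ^+ n - qpar ^- n) / (qpar - qpar^-1).

Definition qfact (n : nat) : R[i] := \prod_(1 <= k < n.+1) qint k.

Definition csign (z : R[i]) : rat :=
  if 0 < z then 1 else if z < 0 then -1 else 0.

(* epsilon_n = (-1)^(floor(n s / r)) = sign [n] *)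
Definition eps (n : nat) : rat := (-1) ^+ (n * s %/ r)%N.

Definition admissible (i j k : nat) : bool :=
  [&& i <= r - 2, j <= r - 2, k <= r - 2,
      i <= j + k, j <= i + k, k <= i + j,
      ~~ odd (i + j + k) & i + j + k <= 2 * r - 4]%N.

Definition theta (i j k : nat) : R[i] :=
  let a := ((j + k - i) %/ 2)%N in
  let b := ((i + k - j) %/ 2)%N in
  let c := ((i + j - k) %/ 2)%N in
  (-1) ^+ (a + b + c)%N *
  (qfact (a + b + c + 1)%N * qfact a * qfact b * qfact c) /
  (qfact (a + b)%N * qfact (a + c)%N * qfact (b + c)%N).

(* the algebra V_q: vectors indexed by e_0, ..., e_(r-2) *)
Definition Vq := 'rV[rat]_(r - 1)%N.

Definition e (n : nat) : Vq := \row_(k < (r - 1)%N) (if (k : nat) == n then 1 else 0).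

Definition eta_d (i : nat) : rat := (-1) ^+ i * eps i.+1.

Definition eta (x y : Vq) : rat := \sum_(k < (r - 1)%N) x 0 k * y 0 k * eta_d k.

Definition omega_b (i j k : nat) : rat :=
  if admissible i j k then csign (theta i j k) else 0.

Definition omega (x y z : Vq) : rat :=
  \sum_(i < (r - 1)%N) \sum_(j < (r - 1)%N) \sum_(k < (r - 1)%N)
     x 0 i * y 0 j * z 0 k * omega_b i j k.

(* product determined by eta(x.y, z) = omega(x, y, z) (eta is diagonal, nondegenerate):
   the e_k-coordinate of x.y is omega(x, y, e_k) / eta(e_k, e_k). *)
Definition vmul (x y : Vq) : Vq :=
  \row_(k < (r - 1)%N) (omega x y (e k) / eta_d k).

End Vq.

Arguments vmul R r s x y : clear implicits.
Arguments omega R r s x y z : clear implicits.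
Arguments eta r s x y : clear implicits.

(* Main.v *)
Require Import Defs.
From HB Require Import structures.
From mathcomp Require Import all_boot all_order all_algebra.
From mathcomp Require Import reals trigo.
From mathcomp Require Import complex.
From mathcomp Require Import ring lra zify.
Import Order.TTheory GRing.Theory Num.Theory.
Local Open Scope ring_scope.

Lemma mulC (R : realType) (a b c d : R) : (Complex a b) * (Complex c d) = Complex (a*c - b*d) (a*d + b*c).
Proof. by []. Qed.
Lemma subC (R : realType) (a b c d : R) : (Complex a b) - (Complex c d) = Complex (a-c) (b-d).
Proof. by []. Qed.

Section Trig.
Variables (R : realType) (r s : nat).
Hypotheses (r5 : (5 <= r)%N) (s0 : (0 < s)%N) (sr : (s < r)%N) (oddr : odd r) (odds : odd s)
  (cop : coprime r s).

Let th : R := pi * s%:R / r%:R.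

Lemma cis_inv (a : R) : (Complex (cos a) (sin a))^-1 = Complex (cos a) (- sin a).
Proof.
have h : Complex (cos a) (sin a) * Complex (cos a) (- sin a) = 1.
  rewrite mulC mulrN opprK -!expr2 cos2Dsin2 mulrN mulrC addNr //.
have nz : Complex (cos a) (sin a) != 0.
  by apply/eqP => h0; move: h; rewrite h0 mul0r => /eqP; rewrite eq_sym oner_eq0.
by rewrite -[LHS]mulr1 -h mulKf.
Qed.

Lemma qpowE n : qpar R r s ^+ n = Complex (cos (n%:R * th)) (sin (n%:R * th)).
Proof.
elim: n => [|n IH]; first by rewrite expr0 mul0r cos0 sin0.
rewrite exprSr IH /qpar -/th mulC -addn1 natrD mulrDl mul1r cosD sinD.
by congr Complex; rewrite addrC.
Qed.

Lemma th_gt0 : 0 < th.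
Proof. by rewrite /th divr_gt0 ?mulr_gt0 ?pi_gt0 ?ltr0n // (leq_trans _ sr). Qed.

Lemma th_ltpi : th < pi.
Proof.
rewrite /th ltr_pdivrMr ?ltr0n ?(leq_trans _ sr) // ltr_pM2l ?pi_gt0 //.
by rewrite ltr_nat.
Qed.

Lemma sinth_gt0 : 0 < sin th.
Proof. by apply: sin_gt0_pi; rewrite th_gt0 th_ltpi. Qed.

Definition Sr n : R := sin (n%:R * th) / sin th.

Lemma qintE n : qint R r s n = real_complex R (Sr n).
Proof.
have sn : sin th != 0 by rewrite gt_eqF // sinth_gt0.
rewrite /qint qpowE /qpar -/th !cis_inv !subC !subrr opprK -!mulr2n.
have nz : Complex 0 (sin th *+ 2) != 0.
  rewrite eq_complex /= negb_and mulrn_eq0 /= sn orbT //.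
rewrite opprK -mulr2n. apply: (mulIf nz); rewrite divfK // /Sr mulC /=.
by rewrite !mul0r !mulr0 subr0 addr0 mulrnAr divfK.
Qed.


Lemma sinDnpi m (y : R) : sin (y + m%:R * pi) = (-1)^+m * sin y.
Proof.
elim: m => [|m IH]; first by rewrite mul0r addr0 expr0 mul1r.
by rewrite -addn1 natrD mulrDl mul1r addrA sinDpi IH exprD expr1 mulrN1 mulNr.
Qed.

Lemma r_gt0 : (0 < r)%N. Proof. by apply: leq_trans r5. Qed.

Lemma sign_sin n : (0 < n < r)%N -> 0 < (-1)^+(n * s %/ r) * sin (n%:R * th).
Proof.
case/andP => n0 nr.
set m := (n * s %/ r)%N; set t := (n * s %% r)%N.
have rR : (r%:R : R) != 0 by rewrite pnatr_eq0 -lt0n r_gt0.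
have e : (n%:R * s%:R : R) = m%:R * r%:R + t%:R by rewrite -!natrM -natrD -divn_eq.
have t0 : (0 < t)%N.
  rewrite lt0n; apply/negP => /eqP t0.
  have : (r %| n * s)%N by rewrite /dvdn -/t t0.
  rewrite Gauss_dvdl // => /(dvdn_leq n0); rewrite leqNgt nr.
  done.
have tr : (t < r)%N by rewrite ltn_pmod // r_gt0.
have -> : n%:R * th = pi * t%:R / r%:R + m%:R * pi.
  have et : (t%:R : R) = n%:R * s%:R - m%:R * r%:R by rewrite e addrC addKr.
  by rewrite /th et; field.
rewrite sinDnpi mulrA -exprD addnn -signr_odd odd_double expr0 mul1r.
apply: sin_gt0_pi; apply/andP; split.
  by rewrite divr_gt0 ?mulr_gt0 ?pi_gt0 ?ltr0n // r_gt0.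
by rewrite ltr_pdivrMr ?ltr0n ?r_gt0 // ltr_pM2l ?pi_gt0 // ltr_nat.
Qed.

Lemma Sr_sign n : (0 < n < r)%N -> 0 < (-1)^+(n * s %/ r) * Sr n.
Proof. by move=> h; rewrite /Sr mulrA divr_gt0 ?sign_sin ?sinth_gt0. Qed.

Lemma Sr_neq0 n : (0 < n < r)%N -> Sr n != 0.
Proof. by move=> /Sr_sign; apply: contraTneq => ->; rewrite mulr0 ltxx. Qed.

Lemma Sr1 : Sr 1 = 1.
Proof. by rewrite /Sr mul1r divff // gt_eqF // sinth_gt0. Qed.

Lemma Sr_sym n : (n <= r)%N -> Sr (r - n) = Sr n.
Proof.
move=> nr; rewrite /Sr.
have rR : (r%:R : R) != 0 by rewrite pnatr_eq0 -lt0n r_gt0.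
have -> : (r - n)%:R * th = - (n%:R * th) + s%:R * pi.
  by rewrite natrB // /th; field.
by rewrite sinDnpi sinN -signr_odd odds expr1 mulN1r opprK.
Qed.


Definition Fr n : R := \prod_(1 <= k < n.+1) Sr k.

Lemma qfactE n : qfact R r s n = real_complex R (Fr n).
Proof. by rewrite /qfact /Fr rmorph_prod; apply: eq_bigr => k _; rewrite qintE. Qed.

Lemma Fr0 : Fr 0 = 1. Proof. by rewrite /Fr big_geq. Qed.
Lemma FrS n : Fr n.+1 = Fr n * Sr n.+1. Proof. by rewrite /Fr big_nat_recr. Qed.
Lemma Fr1 : Fr 1 = 1. Proof. by rewrite FrS Fr0 Sr1 mulr1. Qed.

Lemma Fr_neq0 n : (n < r)%N -> Fr n != 0.
Proof.
elim: n => [|n IH] h; first by rewrite Fr0 oner_eq0.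
by rewrite FrS mulf_neq0 ?IH ?Sr_neq0 // (ltn_trans _ h).
Qed.

Definition Tr a b c : R := (-1)^+(a+b+c) * (Fr (a+b+c+1) * Fr a * Fr b * Fr c) /
   (Fr (a+b) * Fr (a+c) * Fr (b+c)).

Lemma thetaE i j k a b c : i = (b+c)%N -> j = (a+c)%N -> k = (a+b)%N ->
  theta R r s i j k = real_complex R (Tr a b c).
Proof.
move=> -> -> ->; rewrite /theta.
have -> : ((a + c + (a + b) - (b + c)) %/ 2 = a)%N.
  by rewrite (_ : _ - _ = a * 2)%N ?mulnK //; lia.
have -> : ((b + c + (a + b) - (a + c)) %/ 2 = b)%N.
  by rewrite (_ : _ - _ = b * 2)%N ?mulnK //; lia.
have -> : ((b + c + (a + c) - (a + b)) %/ 2 = c)%N.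
  by rewrite (_ : _ - _ = c * 2)%N ?mulnK //; lia.
by rewrite !qfactE /Tr !rmorphM fmorphV !rmorphM rmorphXn rmorphN1.
Qed.

Lemma csignE m (x : R) : 0 < (-1)^+m * x -> csign (real_complex R x) = (-1)^+m.
Proof.
rewrite /csign -(rmorph0 (real_complex R)) !ltcR -[(-1 : R)^+m]signr_odd -[(-1 : rat)^+m]signr_odd.
case: (odd m) => /=; rewrite ?expr0 ?expr1 ?mul1r ?mulN1r => h.
  have hx : x < 0 by rewrite -oppr_gt0.
  by rewrite (lt_gtF hx) hx.
by rewrite h.
Qed.

Lemma sign_uniq p q (x : R) : 0 < (-1)^+p * x -> 0 < (-1)^+q * x -> ((-1)^+p : rat) = (-1)^+q.
Proof.
rewrite -[(-1 : R)^+p]signr_odd -[(-1 : R)^+q]signr_odd -[(-1 : rat)^+p]signr_odd -[(-1 : rat)^+q]signr_odd.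
case: (odd p); case: (odd q) => h1 h2 //; exfalso; move: h1 h2; rewrite ?expr0 ?expr1 ?mul1r ?mulN1r => h1 h2; lra.
Qed.

Lemma eps_sign n : (0 < n < r)%N -> 0 < (-1)^+(n * s %/ r) * Sr n.
Proof. exact: Sr_sign. Qed.

Lemma eps_sym n : (0 < n < r)%N -> eps r s (r - n) = eps r s n.
Proof.
case/andP=> n0 nr; rewrite /eps; apply: (@sign_uniq _ _ (Sr n)).
  rewrite -Sr_sym ?(ltnW nr) //; apply: Sr_sign; apply/andP; split; [by rewrite subn_gt0 | by rewrite ltn_subrL n0 r_gt0].
by rewrite Sr_sign // n0.
Qed.

Lemma eps1 : eps r s 1 = 1.
Proof. by rewrite /eps mul1n divn_small. Qed.

End Trig.

Lemma sum_one n a (ha : (a < n)%N) (G : 'I_n -> rat) :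
  (forall i : 'I_n, (i : nat) != a -> G i = 0) -> \sum_i G i = G (Ordinal ha).
Proof.
move=> h; rewrite (bigD1 (Ordinal ha)) //= big1 ?addr0 // => i ne; apply: h.
all: try by apply: contra ne => /eqP e0; apply/eqP/val_inj.
Qed.

Lemma omega_e (R : realType) r s c1 c2 a b k (ha : (a < r - 1)%N) (hb : (b < r - 1)%N)
  (hk : (k < r - 1)%N) :
  omega R r s (c1 *: e r a) (c2 *: e r b) (e r k) = c1 * c2 * omega_b R r s a b k.
Proof.
rewrite /omega (@sum_one _ a ha); last first.
  move=> i ne; apply: big1 => j _; apply: big1 => l _.
  by rewrite !mxE (negbTE ne) !(mulr0, mul0r).
rewrite (@sum_one _ b hb); last first.
  move=> j ne; apply: big1 => l _.
  by rewrite !mxE (negbTE ne) !(mulr0, mul0r).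
rewrite (@sum_one _ k hk); last first.
  by move=> l ne; rewrite !mxE (negbTE ne) !(mulr0, mul0r).
by rewrite !mxE /= !eqxx !mulr1.
Qed.

Lemma vmul_e (R : realType) r s c1 c2 a b (ha : (a < r - 1)%N) (hb : (b < r - 1)%N) :
  vmul R r s (c1 *: e r a) (c2 *: e r b) =
  \row_(k < (r - 1)%N) (c1 * c2 * omega_b R r s a b k / eta_d r s k).
Proof. by apply/rowP => k; rewrite !mxE omega_e. Qed.

Lemma vmul_e1 (R : realType) r s a b (ha : (a < r - 1)%N) (hb : (b < r - 1)%N) :
  vmul R r s (e r a) (e r b) =
  \row_(k < (r - 1)%N) (omega_b R r s a b k / eta_d r s k).
Proof.
by rewrite -[e r a]scale1r -[e r b]scale1r vmul_e //; apply/rowP => k; rewrite !mxE !mul1r.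
Qed.

Lemma adm_elim r i j k : admissible r i j k ->
  [/\ (i <= r - 2)%N, (j <= r - 2)%N, (k <= r - 2)%N, (i <= j + k)%N & 
   [/\ (j <= i + k)%N, (k <= i + j)%N, ~~ odd (i + j + k) & (i + j + k <= 2 * r - 4)%N]].
Proof.
rewrite /admissible => /andP[h1 /andP[h2 /andP[h3 /andP[h4 /andP[h5 /andP[h6 /andP[h7 h8]]]]]]].
by split.
Qed.

Lemma adm_intro r i j k : (i <= r - 2)%N -> (j <= r - 2)%N -> (k <= r - 2)%N -> (i <= j + k)%N ->
  (j <= i + k)%N -> (k <= i + j)%N -> ~~ odd (i + j + k) -> (i + j + k <= 2 * r - 4)%N ->
  admissible r i j k.
Proof. by move=> *; rewrite /admissible; repeat (apply/andP; split). Qed.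

Lemma signV (R : realType) m (x : R) : 0 < (-1)^+m * x -> 0 < (-1)^+m * x^-1.
Proof.
rewrite -signr_odd; case: (odd m); rewrite ?expr0 ?expr1 ?mul1r ?mulN1r.
  by rewrite -invrN invr_gt0.
by rewrite invr_gt0.
Qed.

Lemma gt0_eq (R : realType) (a b : R) : 0 < a -> a = b -> 0 < b.
Proof. by move=> h <-. Qed.
Arguments gt0_eq {R a b}.
Arguments signV {R m x}.

Theorem mainTheorem5 (R : realType) (r s : nat) :
  (5 <= r)%N -> odd r -> odd s -> coprime r s -> (0 < s)%N -> (s < r)%N ->
  let x := e r 1 in
  let y := e r 2 in
  let iota := e r (r - 2) in
  let w := eps r s 2 *: e r (r - 3) in
  vmul R r s x x = y - eps r s 2 *: e r 0 /\
  vmul R r s x x = - vmul R r s w w /\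
  (forall n : nat, (n <= r - 2)%N ->
     vmul R r s iota (e r n) = ((-1) ^+ n * eps r s n.+1) *: e r (r - 2 - n)) /\
  vmul R r s iota iota = - e r 0.
Proof.
move=> r5 oddr odds cop s0 sr x y iota w.
have thE := @thetaE R r s r5 s0 sr oddr odds cop.
have Ssg := @Sr_sign R r s r5 s0 sr cop.
have FS := @FrS R r s. have F0 := @Fr0 R r s. have S1 := @Sr1 R r s s0 sr.
have Sr2 : Sr R r s (r - 2) = Sr R r s 2 by rewrite Sr_sym //; lia.
have Sr3 : Sr R r s (r - 3) = Sr R r s 3 by rewrite Sr_sym //; lia.
have Sr1' : Sr R r s (r - 1) = 1 by rewrite Sr_sym ?S1 //; lia.
have nz n : (0 < n < r)%N -> Sr R r s n != 0 by move=> h; apply: Sr_neq0.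
have Fnz n : (n < r)%N -> Fr R r s n != 0 by move=> h; apply: Fr_neq0.
have eta0 : eta_d r s 0 = 1 by rewrite /eta_d expr0 mul1r eps1.
have PA : vmul R r s x x = y - eps r s 2 *: e r 0.
  rewrite /x /y vmul_e1; try lia.
  apply/rowP => -[k hk]; rewrite !mxE /=.
  case: k hk => [|[|[|k]]] hk /=.
  - rewrite /omega_b adm_intro /=; try lia.
    rewrite (thE _ _ _ 0%N 0%N 1%N) // (@csignE _ (2 * s %/ r)%N.+1).
      by rewrite eta0 /eps exprS; field.
    apply: (gt0_eq (Ssg 2%N _)); first lia.
    by rewrite /Tr /= !FS F0 S1 exprS ?expr1; field.
  - rewrite /omega_b; case: ifP => [/adm_elim [_ _ _ _ [_ _ //]] | _].
    by rewrite mul0r mulr0 subr0.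
  - rewrite /omega_b adm_intro /=; try lia.
    rewrite (thE _ _ _ 1%N 1%N 0%N) // (@csignE _ (3 * s %/ r)%N).
      rewrite /eta_d /eps mulr0 subr0; field; by rewrite signr_eq0.
    apply: (gt0_eq (Ssg 3%N _)); first lia.
    rewrite /Tr /= !FS F0 S1; field; apply: nz; lia.
  - rewrite /omega_b; case: ifP => [/adm_elim [_ _ _ _ [_ h _ _]] | _]; first lia.
    by rewrite mul0r mulr0 subr0.
have PB : vmul R r s x x = - vmul R r s w w.
  rewrite PA /w vmul_e; try lia.
  apply/rowP => -[k hk]; rewrite !mxE /=.
  case: k hk => [|[|[|k]]] hk /=.
  - rewrite /omega_b adm_intro; try lia.
    rewrite (thE _ _ _ 0 0 (r - 3)%N); try lia.
    rewrite (@csignE _ (2 * s %/ r)%N).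
      rewrite eta0 /eps mulr1 -[(-1 : rat) ^+ (2 * s %/ r)%N]signr_odd.
      by case: odd; rewrite ?expr0 ?expr1; field.
    apply: (gt0_eq (Ssg 2%N _)); first lia.
    rewrite /Tr !add0n addn1 FS (_ : (r - 3).+1 = r - 2)%N; last lia.
    rewrite Sr2 (_ : (-1) ^+ (r - 3) = 1 :> R); last first.
      by rewrite -signr_odd oddB ?oddr //; lia.
    rewrite F0; field; apply: Fnz; lia.
  - rewrite /omega_b; case: ifP => [/adm_elim [_ _ _ _ [_ _ h _]] | _].
      by move: h; rewrite addn1 addnn /= odd_double.
    by rewrite !(mulr0, mul0r) subrr oppr0.
  - rewrite /omega_b adm_intro; try lia.
    rewrite (thE _ _ _ 1 1 (r - 4)%N); try lia.
    rewrite (@csignE _ (3 * s %/ r)%N.+1).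
      rewrite /eta_d /eps mulr0 subr0 exprS -[(-1 : rat) ^+ (2 * s %/ r)%N]signr_odd.
      rewrite -[(-1 : rat) ^+ (3 * s %/ r)%N]signr_odd.
      by case: odd; case: odd; rewrite ?expr0 ?expr1; field.
    apply: (gt0_eq (signV (Ssg 3%N _))); first lia.
    rewrite /Tr (_ : (1 + 1 + (r - 4) + 1 = (r - 4).+3)%N); last lia.
    rewrite (_ : (1 + 1 + (r - 4) = r - 2)%N); last lia.
    rewrite (_ : (1 + (r - 4) = (r - 4).+1)%N); last lia.
    rewrite !FS F0 S1.
    rewrite (_ : (r - 4).+1 = r - 3)%N; last lia.
    rewrite (_ : (r - 3).+1 = r - 2)%N; last lia.
    rewrite (_ : (r - 2).+1 = r - 1)%N; last lia.
    rewrite Sr3 Sr2 Sr1' (_ : (-1) ^+ (r - 2) = -1 :> R); last first.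
      by rewrite -signr_odd oddB ?oddr //; lia.
    rewrite exprS; field.
    by rewrite !nz ?Fnz //; lia.
  - rewrite /omega_b; case: ifP => [/adm_elim [_ _ _ _ [_ _ _ h]] | _]; first lia.
    by rewrite !(mul0r, mulr0) subrr oppr0.
have PC : forall n : nat, (n <= r - 2)%N ->
     vmul R r s iota (e r n) = ((-1) ^+ n * eps r s n.+1) *: e r (r - 2 - n).
  move=> n hn; rewrite /iota vmul_e1; try lia.
  apply/rowP => -[k hk]; rewrite !mxE /=.
  case: (eqVneq k (r - 2 - n)%N) => [-> | ne].
  - rewrite /omega_b adm_intro; try lia.
    rewrite (thE _ _ _ 0%N (r - 2 - n)%N n); try lia.
    rewrite (@csignE _ 1%N); last first.
      apply: (gt0_eq ltr01).
      rewrite /Tr !add0n subnK; last lia.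
      rewrite addn1 FS (_ : (r - 2).+1 = r - 1)%N; last lia.
      rewrite Sr1' F0 (_ : (-1) ^+ (r - 2) = -1 :> R); last first.
        by rewrite -signr_odd oddB ?oddr //; lia.
      field; by rewrite !Fnz //; lia.
    rewrite /eta_d (_ : (r - 2 - n).+1 = r - n.+1)%N; last lia.
    rewrite (@eps_sym R r s r5 s0 sr odds cop n.+1); last by apply/andP; split; lia.
    have -> : (-1) ^+ (r - 2 - n) = - (-1) ^+ n :> rat.
      rewrite -signr_odd oddB; last lia.
      rewrite oddB; last lia.
      rewrite oddr /= -[(-1 : rat) ^+ n]signr_odd.
      by case: odd; rewrite ?expr0 ?expr1 ?opprK.
    rewrite /eps -[(-1 : rat) ^+ (n.+1 * s %/ r)%N]signr_odd -[(-1 : rat) ^+ n]signr_odd.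
    by case: odd; case: odd; rewrite ?expr0 ?expr1; field.
  - rewrite mulr0 /omega_b; case: ifP => [/adm_elim [_ _ _ h1 [_ _ _ h2]] | _].
      move/eqP: ne; lia.
    by rewrite mul0r.
split; first exact: PA.
split; first exact: PB.
split; first exact: PC.
rewrite /iota PC // subnn (_ : (r - 2).+1 = r - 1)%N; last lia.
rewrite (@eps_sym R r s r5 s0 sr odds cop 1%N) ?eps1 //; last by apply/andP; split; lia.
rewrite -signr_odd oddB; last lia.
by rewrite oddr /= expr1 mulr1 scaleN1r.
Qed.
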